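(* Let $s_B(\theta|\mathcal{X})\in\mathbb{R}^d$ be a fixed (learned) approximation of the posterior score $\nabla_\theta\log p(\theta|\mathcal{X})$ with $\mathbb{E}\|s_B(\theta|\mathcal{X})\|_2^2<\infty$ and $\mathbb{E}\|\nabla_\theta\log p(\theta|\mathcal{X})\|_2^2<\infty$, and assume $F_B\neq 0$. Let $\mathcal{L}_B=\mathbb{E}_{\theta,\mathcal{X}}\|s_B(\theta|\mathcal{X})-\nabla_\theta\log p(\theta|\mathcal{X})\|_2^2$, $\mathrm{sRE}_B=\mathcal{L}_B/\mathrm{Tr}(F_B)$ and $d_B=\mathrm{intdim}(F_B)$. If $d_B\cdot\mathrm{sRE}_B\le 0.16$, then $$\frac{\|\bar F_B-F_B\|_2}{\|F_B\|_2}\le 2.4\sqrt{d_B\cdot\mathrm{sRE}_B}.$$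
   Context: Setup: $\theta\in\Theta\subseteq\mathbb{R}^d$ is a random parameter with prior density $p(\theta)$; given $\theta$, $\mathcal{X}=\{X_i\}_{i=1}^{n}$ are i.i.d. observations with density $p(x|\theta)$; $p(\theta|\mathcal{X})$ is the posterior. The Bayesian Fisher information matrix is $F_B=\mathbb{E}_{\theta,\mathcal{X}}[\nabla_\theta\log p(\theta|\mathcal{X})\nabla_\theta\log p(\theta|\mathcal{X})^T]$, and the learned Bayesian FIM is $\bar F_B=\mathbb{E}_{\theta,\mathcal{X}}[s_B(\theta|\mathcal{X})s_B(\theta|\mathcal{X})^T]$. For a nonzero positive semidefinite matrix $A$, $\mathrm{intdim}(A)=\mathrm{Tr}(A)/\|A\|_2$ (intrinsic dimension); $\|\cdot\|_2$ is the spectral norm. *)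

(* Defs.v *)
From HB Require Import structures.
From mathcomp Require Import all_boot all_order all_algebra.
From mathcomp Require Import all_classical all_reals all_analysis.
Set Implicit Arguments. Unset Strict Implicit. Unset Printing Implicit Defensive.
Import Order.TTheory GRing.Theory Num.Theory.
Local Open Scope ring_scope.
Local Open Scope classical_set_scope.

Definition vnorm (R : realType) (d : nat) (v : 'rV[R]_d) : R :=
  Num.sqrt (\sum_(i < d) v 0 i ^+ 2).

(* Spectral norm ||A||_2 = sup_{||v||_2 <= 1} ||A v||_2 (operator 2-norm).
   Vectors are rows, so A v is written v *m A^T. *)
Definition spnorm (R : realType) (d : nat) (A : 'M[R]_d) : R :=
  sup [set vnorm (v *m A^T) | v in [set v : 'rV[R]_d | vnorm v <= 1]].

Definition intdim (R : realType) (d : nat) (A : 'M[R]_d) : R :=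
  \tr A / spnorm A.

Definition expect (dT : measure_display) (T : measurableType dT) (R : realType)
  (P : probability T R) (f : T -> R) : R :=
  fine (\int[P]_(t in setT) (f t)%:E)%E.

Definition second_moment (dT : measure_display) (T : measurableType dT)
  (R : realType) (P : probability T R) (d : nat) (v : T -> 'rV[R]_d) : 'M[R]_d :=
  \matrix_(i, j) expect P (fun t => v t 0 i * v t 0 j).

(* Main.v *)
Require Import Defs.
From HB Require Import structures.
From mathcomp Require Import all_boot all_order all_algebra.
From mathcomp Require Import all_classical all_reals all_analysis.
From mathcomp Require Import ring lra.
Import Order.TTheory GRing.Theory Num.Theory.
Local Open Scope ring_scope.
Set Implicit Arguments. Unset Strict Implicit. Unset Printing Implicit Defensive.

Section Expect.
Context (dT : measure_display) (T : measurableType dT) (R : realType)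
  (P : probability T R).

Definition Int (f : T -> R) := P.-integrable setT (fun t => (f t)%:E).
Definition V (f : T -> R) := measurable_fun setT f /\ Int (fun t => f t ^+ 2).

Lemma expectD f g : Int f -> Int g ->
  expect P (fun t => f t + g t) = expect P f + expect P g.
Proof.
move=> If Ig; rewrite /expect.
under eq_integral do rewrite EFinD.
rewrite integralD //; rewrite fineD //; apply: integrable_fin_num => //.
Qed.

Lemma IntD f g : Int f -> Int g -> Int (fun t => f t + g t).
Proof.
move=> If Ig; rewrite /Int.
under eq_fun do rewrite EFinD.
exact: (integrableD _ If Ig).
Qed.

Lemma IntZ k f : Int f -> Int (fun t => k * f t).
Proof.
move=> If; rewrite /Int.
under eq_fun do rewrite EFinM.
exact: integrableZl.
Qed.

Lemma expectZ k f : Int f -> expect P (fun t => k * f t) = k * expect P f.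
Proof.
move=> If; rewrite /expect.
under eq_integral do rewrite EFinM.
rewrite integralZl //= fineM //; apply: integrable_fin_num => //.
Qed.

Lemma Int_sum (I : Type) (s : seq I) (F : I -> T -> R) :
  (forall i, Int (F i)) -> Int (fun t => \sum_(i <- s) F i t).
Proof.
move=> IF; elim: s => [|a s IH].
  rewrite /Int; under eq_fun do rewrite big_nil.
  exact: (integrable0).
under eq_fun do rewrite big_cons.
exact: IntD.
Qed.

Lemma expect_sum (I : Type) (s : seq I) (F : I -> T -> R) :
  (forall i, Int (F i)) ->
  expect P (fun t => \sum_(i <- s) F i t) = \sum_(i <- s) expect P (F i).
Proof.
move=> IF; elim: s => [|a s IH].
  rewrite big_nil /expect; under eq_integral do rewrite big_nil.
  by rewrite integral0.
under eq_fun do rewrite big_cons.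
rewrite expectD //; last exact: Int_sum.
by rewrite IH big_cons.
Qed.

Lemma expect_le f g : Int f -> Int g -> (forall t, f t <= g t) ->
  expect P f <= expect P g.
Proof.
move=> If Ig fg; rewrite /expect; apply: fine_le;
  try exact: integrable_fin_num.
apply: le_integral => // x _; rewrite lee_fin; exact: fg.
Qed.

Lemma expect_ge0 f : (forall t, 0 <= f t) -> 0 <= expect P f.
Proof.
move=> f0; rewrite /expect; apply: fine_ge0; apply: integral_ge0 => x _.
by rewrite lee_fin.
Qed.
End Expect.

Lemma disc (R : realFieldType) (a b c : R) :
  (forall l : R, 0 <= a + 2 * l * b + l ^+ 2 * c) -> 0 <= a -> 0 <= c ->
  b ^+ 2 <= a * c.
Proof.
move=> H a0 c0.
have [c0'|cpos] := eqVneq c 0.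
  subst c; rewrite mulr0.
  have [->|b0] := eqVneq b 0; first by rewrite expr0n.
  have := H (- (a + 1) / (2 * b)).
  have -> : a + 2 * (- (a + 1) / (2 * b)) * b + (- (a + 1) / (2 * b)) ^+ 2 * 0
     = -1.
    by field; rewrite b0.
  by move=> h; exfalso; lra.
have cp : 0 < c by rewrite lt_neqAle eq_sym cpos c0.
have := H (- b / c).
have -> : a + 2 * (- b / c) * b + (- b / c) ^+ 2 * c = (a * c - b ^+ 2) / c.
  by field.
by rewrite pmulr_lge0 ?invr_gt0 // subr_ge0.
Qed.

Section VS.
Context (dT : measure_display) (T : measurableType dT) (R : realType)
  (P : probability T R).

Lemma Int_meas (f : T -> R) : Int P f -> measurable_fun setT f.
Proof. by move=> /measurable_int /measurable_realfun.measurable_EFinP. Qed.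

Lemma V_mul f g : V P f -> V P g -> Int P (fun t => f t * g t).
Proof.
move=> [mf If] [mg Ig].
apply: (le_integrable _ _ _ (IntD If Ig)) => //.
  by apply/measurable_realfun.measurable_EFinP; exact: measurable_realfun.measurable_funM.
move=> t _ /=; rewrite lee_fin.
have h1 : 0 <= f t ^+ 2 + g t ^+ 2 by rewrite addr_ge0 // sqr_ge0.
rewrite (ger0_norm h1) normrM -(real_normK (num_real (f t))) -(real_normK (num_real (g t))).
have := normr_ge0 (f t); have := normr_ge0 (g t); nra.
Qed.

Lemma V_add f g : V P f -> V P g -> V P (fun t => f t + g t).
Proof.
move=> Vf Vg; have [mf If] := Vf; have [mg Ig] := Vg; split.
  exact: measurable_realfun.measurable_funD.
have := V_mul Vf Vg => Ifg.
have -> : (fun t => (f t + g t) ^+ 2) =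
   (fun t => f t ^+ 2 + ((fun t => 2 * (f t * g t)) t + g t ^+ 2)).
  by apply: funext => t /=; ring.
apply: IntD => //; apply: IntD => //; exact: IntZ.
Qed.

Lemma V_scale k f : V P f -> V P (fun t => k * f t).
Proof.
move=> [mf If]; split.
  exact: measurable_realfun.measurable_funM.
have -> : (fun t => (k * f t) ^+ 2) = (fun t => k ^+ 2 * f t ^+ 2).
  by apply: funext => t /=; ring.
exact: IntZ.
Qed.

Lemma V_0 : V P (fun _ => 0).
Proof.
split; first exact: measurable_cst.
rewrite /Int; under eq_fun do rewrite expr0n /=.
exact: integrable0.
Qed.

Lemma V_sum (I : Type) (s : seq I) (F : I -> T -> R) :
  (forall i, V P (F i)) -> V P (fun t => \sum_(i <- s) F i t).
Proof.
move=> VF; elim: s => [|a s IH].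
  have -> : (fun t => \sum_(i <- [::]) F i t) = (fun _ => 0).
    by apply: funext => t; rewrite big_nil.
  exact: V_0.
have -> : (fun t => \sum_(i <- a :: s) F i t) =
   (fun t => F a t + (fun t => \sum_(i <- s) F i t) t).
  by apply: funext => t; rewrite big_cons.
exact: V_add.
Qed.

Lemma CS f g : V P f -> V P g ->
  `|expect P (fun t => f t * g t)| <=
   Num.sqrt (expect P (fun t => f t ^+ 2)) * Num.sqrt (expect P (fun t => g t ^+ 2)).
Proof.
move=> Vf Vg.
have [mf If] := Vf; have [mg Ig] := Vg; have Ifg := V_mul Vf Vg.
set a := expect P (fun t => f t ^+ 2); set c := expect P (fun t => g t ^+ 2).
set b := expect P (fun t => f t * g t).
have a0 : 0 <= a by apply: expect_ge0 => t; exact: sqr_ge0.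
have c0 : 0 <= c by apply: expect_ge0 => t; exact: sqr_ge0.
have H : forall l : R, 0 <= a + 2 * l * b + l ^+ 2 * c.
  move=> l.
  have -> : a + 2 * l * b + l ^+ 2 * c =
     expect P (fun t => f t ^+ 2 + ((fun t => (2 * l) * (f t * g t)) t
                                   + (fun t => l ^+ 2 * g t ^+ 2) t)).
    rewrite expectD //; last by apply: IntD; apply: IntZ.
    rewrite expectD; try apply: IntZ => //.
    by rewrite !expectZ // addrA.
  apply: expect_ge0 => t /=.
  rewrite (_ : _ + _ = (f t + l * g t) ^+ 2); first exact: sqr_ge0.
  ring.
have h := disc H a0 c0.
by rewrite -sqrtrM // -sqrtr_sqr ler_sqrt // mulr_ge0.
Qed.
End VS.

Section LA.
Local Open Scope classical_set_scope.
Context (R : realType) (d : nat).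
Implicit Types (u v w : 'rV[R]_d) (A : 'M[R]_d).

Definition dot u v := \sum_(i < d) u 0 i * v 0 i.

Lemma dot_ge0 v : 0 <= dot v v.
Proof. by apply: sumr_ge0 => i _; rewrite -expr2 sqr_ge0. Qed.

Lemma vnormE v : vnorm v = Num.sqrt (dot v v).
Proof. by rewrite /vnorm /dot; congr Num.sqrt; apply: eq_bigr => i _; rewrite expr2. Qed.

Lemma vnorm_ge0 v : 0 <= vnorm v.
Proof. exact: sqrtr_ge0. Qed.

Lemma vnorm_sq v : vnorm v ^+ 2 = dot v v.
Proof. by rewrite vnormE sqr_sqrtr // dot_ge0. Qed.

Lemma dotC u v : dot u v = dot v u.
Proof. by apply: eq_bigr => i _; rewrite mulrC. Qed.

Lemma dotB u x y : dot u (x - y) = dot u x - dot u y.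
Proof. by rewrite /dot -sumrB; apply: eq_bigr => i _; rewrite !mxE; ring. Qed.

Lemma CSv u v : `|dot u v| <= vnorm u * vnorm v.
Proof.
have H : forall l : R, 0 <= dot u u + 2 * l * dot u v + l ^+ 2 * dot v v.
  move=> l.
  have -> : dot u u + 2 * l * dot u v + l ^+ 2 * dot v v =
            \sum_(i < d) (u 0 i + l * v 0 i) ^+ 2.
    rewrite /dot !mulr_sumr -!big_split /=; apply: eq_bigr => i _; ring.
  by apply: sumr_ge0 => i _; rewrite sqr_ge0.
have h := disc H (dot_ge0 u) (dot_ge0 v).
by rewrite !vnormE -sqrtrM ?dot_ge0 // -sqrtr_sqr ler_sqrt // mulr_ge0 // dot_ge0.
Qed.

Lemma CSv2 u v : dot u v ^+ 2 <= vnorm u ^+ 2 * vnorm v ^+ 2.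
Proof.
have h := CSv u v; rewrite -(real_normK (num_real (dot u v))) -exprMn.
by rewrite lerXn2r // ?nnegrE ?mulr_ge0 ?vnorm_ge0.
Qed.

Lemma mulmx_coord v A j : (v *m A^T) 0 j = \sum_(i < d) v 0 i * A j i.
Proof. by rewrite !mxE; apply: eq_bigr => i _; rewrite mxE. Qed.

Lemma dot_mulmx a b A :
  dot a (b *m A^T) = \sum_(j < d) \sum_(i < d) a 0 j * b 0 i * A j i.
Proof.
rewrite /dot; apply: eq_bigr => j _; rewrite mulmx_coord mulr_sumr.
by apply: eq_bigr => i _; rewrite mulrA.
Qed.

Lemma vnorm_scale k w : vnorm (k *: w) = `|k| * vnorm w.
Proof.
rewrite !vnormE -sqrtr_sqr -sqrtrM ?sqr_ge0 //; congr Num.sqrt.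
rewrite /dot mulr_sumr; apply: eq_bigr => i _; rewrite !mxE; ring.
Qed.

Definition Kb A := Num.sqrt (\sum_(j < d) vnorm (row j A) ^+ 2).

Lemma vnorm_mul_le v A : vnorm (v *m A^T) <= vnorm v * Kb A.
Proof.
have -> : vnorm v * Kb A =
    Num.sqrt (vnorm v ^+ 2 * \sum_(j < d) vnorm (row j A) ^+ 2).
  by rewrite sqrtrM ?sqr_ge0 // sqrtr_sqr ger0_norm // vnorm_ge0.
rewrite [vnorm (v *m _)]/vnorm ler_sqrt; last first.
  by rewrite mulr_ge0 ?sqr_ge0 // sumr_ge0 // => j _; rewrite sqr_ge0.
rewrite mulr_sumr; apply: ler_sum => j _.
have -> : (v *m A^T) 0 j = dot v (row j A).
  by rewrite mulmx_coord /dot; apply: eq_bigr => i _; rewrite mxE.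
exact: CSv2.
Qed.

Definition Sset A := [set vnorm (v *m A^T) | v in [set v : 'rV[R]_d | vnorm v <= 1]].

Lemma vnorm0 : vnorm (0 : 'rV[R]_d) = 0.
Proof. by rewrite vnormE /dot big1 ?sqrtr0 // => i _; rewrite mxE mul0r. Qed.

Lemma Sset_sup A : has_sup (Sset A).
Proof.
split.
  exists (vnorm (0 *m A^T)); exists 0 => //=; rewrite vnorm0; exact: ler01.
exists (Kb A) => x [v /= hv <-].
apply: le_trans (vnorm_mul_le v A) _.
by rewrite ler_piMl // sqrtr_ge0.
Qed.

Lemma le_spnorm v A : vnorm v <= 1 -> vnorm (v *m A^T) <= spnorm A.
Proof. by move=> hv; apply: sup_upper_bound (Sset_sup A) _ _; exists v. Qed.

Lemma spnorm_le A c : (forall v, vnorm v <= 1 -> vnorm (v *m A^T) <= c) ->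
  spnorm A <= c.
Proof.
move=> H; apply: ge_sup; first by case: (Sset_sup A).
by move=> x [v /= hv <-]; exact: H.
Qed.

Lemma spnorm_ge0 A : 0 <= spnorm A.
Proof.
apply: le_trans (vnorm_ge0 (0 *m A^T)) (le_spnorm _ _).
by rewrite vnorm0 ler01.
Qed.

Lemma spnorm_hom v A : vnorm (v *m A^T) <= spnorm A * vnorm v.
Proof.
have [n0|npos] := eqVneq (vnorm v) 0.
  rewrite n0 mulr0; apply: le_trans (vnorm_mul_le v A) _.
  by rewrite n0 mul0r.
have np : 0 < vnorm v by rewrite lt_neqAle eq_sym npos vnorm_ge0.
have h1 : vnorm ((vnorm v)^-1 *: v) <= 1.
  by rewrite vnorm_scale ger0_norm ?invr_ge0 ?vnorm_ge0 // mulVf.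
have := le_spnorm A h1.
rewrite -scalemxAl vnorm_scale ger0_norm ?invr_ge0 ?vnorm_ge0 //.
by rewrite ler_pdivrMl // mulrC.
Qed.
End LA.

Lemma coord_sq_le (R : realType) (d : nat) (v : 'rV[R]_d) i :
  v 0 i ^+ 2 <= vnorm v ^+ 2.
Proof.
rewrite vnorm_sq /dot (bigD1 i) //= -expr2 lerDl.
by apply: sumr_ge0 => j _; rewrite -expr2 sqr_ge0.
Qed.

Section Main.
Context (dT : measure_display) (T : measurableType dT) (R : realType)
  (P : probability T R) (d : nat).
Implicit Types (X Y : T -> 'rV[R]_d) (a b : 'rV[R]_d).

Definition VX X := forall i : 'I_d, V P (fun t => X t 0 i).

Lemma V_of_L2 X : (forall i : 'I_d, measurable_fun setT (fun t => X t 0 i)) ->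
  Int P (fun t => vnorm (X t) ^+ 2) -> VX X.
Proof.
move=> mX IX i; split => //.
apply: (le_integrable _ _ _ IX) => //.
  by apply/measurable_realfun.measurable_EFinP;
     apply: measurable_realfun.measurable_funM.
move=> t _ /=; rewrite lee_fin !ger0_norm ?sqr_ge0 //; exact: coord_sq_le.
Qed.

Lemma Vdot X a : VX X -> V P (fun t => dot a (X t)).
Proof.
move=> VXX; rewrite /dot.
apply: V_sum => i.
exact: V_scale.
Qed.

Lemma KI X Y a b : VX X -> VX Y ->
  \sum_(j < d) \sum_(i < d) a 0 j * b 0 i * expect P (fun t => X t 0 j * Y t 0 i)
  = expect P (fun t => dot a (X t) * dot b (Y t)).
Proof.
move=> VXX VYY.
have -> : (fun t => dot a (X t) * dot b (Y t)) =
  (fun t => \sum_(j < d) (fun j t => \sum_(i < d)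
      (fun i t => (a 0 j * b 0 i) * (X t 0 j * Y t 0 i)) i t) j t).
  apply: funext => t /=; rewrite /dot mulr_suml; apply: eq_bigr => j _.
  rewrite mulr_sumr; apply: eq_bigr => i _; ring.
have Ii : forall j i, Int P (fun t => (a 0 j * b 0 i) * (X t 0 j * Y t 0 i)).
  by move=> j i; apply: IntZ; apply: V_mul.
rewrite expect_sum; last by move=> j; apply: Int_sum => i; exact: Ii.
apply: eq_bigr => j _; rewrite expect_sum //.
by apply: eq_bigr => i _; rewrite expectZ //; apply: V_mul.
Qed.

Lemma smE X j i : second_moment P X j i = expect P (fun t => X t 0 j * X t 0 i).
Proof. by rewrite mxE. Qed.

Lemma quad_F X a : VX X ->
  expect P (fun t => dot a (X t) ^+ 2) <= vnorm a ^+ 2 * spnorm (second_moment P X).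
Proof.
move=> VXX.
have -> : expect P (fun t => dot a (X t) ^+ 2) = dot a (a *m (second_moment P X)^T).
  rewrite dot_mulmx.
  under eq_fun do rewrite expr2.
  rewrite -KI //; apply: eq_bigr => j _; apply: eq_bigr => i _; by rewrite smE.
apply: le_trans (ler_norm _) _; apply: le_trans (CSv _ _) _.
rewrite expr2 -mulrA ler_wpM2l ?vnorm_ge0 // mulrC; exact: spnorm_hom.
Qed.

Lemma Int_vnorm2 X : VX X -> Int P (fun t => vnorm (X t) ^+ 2).
Proof.
move=> VXX.
have -> : (fun t => vnorm (X t) ^+ 2) =
     (fun t => \sum_(i < d) (fun i t => X t 0 i * X t 0 i) i t).
  by apply: funext => t; rewrite vnorm_sq.
by apply: Int_sum => i; apply: V_mul.
Qed.

Lemma quad_e X a : VX X ->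
  expect P (fun t => dot a (X t) ^+ 2) <=
  vnorm a ^+ 2 * expect P (fun t => vnorm (X t) ^+ 2).
Proof.
move=> VXX; rewrite -expectZ; last exact: Int_vnorm2.
apply: expect_le.
- by have [] := Vdot a VXX.
- by apply: IntZ; apply: Int_vnorm2.
- by move=> t; apply: CSv2.
Qed.

Lemma tr_ne0 X : VX X -> second_moment P X != 0 -> \tr (second_moment P X) != 0.
Proof.
move=> VXX; apply: contra => /eqP htr.
have hd : forall i, second_moment P X i i = 0.
  move=> i; move: htr; rewrite /mxtrace => /psumr_eq0P; apply => // k _.
  by rewrite smE; apply: expect_ge0 => t; rewrite -expr2 sqr_ge0.
apply/eqP/matrixP => i j; rewrite [RHS]mxE.
apply/eqP; rewrite -normr_le0 smE.
have := CS (VXX i) (VXX j).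
have := hd i; have := hd j; rewrite !smE; under eq_fun do rewrite -expr2.
move=> -> ; under eq_fun do rewrite -expr2.
by move=> ->; rewrite sqrtr0 mulr0.
Qed.
End Main.

Lemma sqrt_bound (R : realType) (x n c : R) :
  x <= n ^+ 2 * c -> 0 <= n -> 0 <= c -> Num.sqrt x <= n * Num.sqrt c.
Proof.
move=> h n0 c0.
have <- : Num.sqrt (n ^+ 2 * c) = n * Num.sqrt c.
  by rewrite sqrtrM ?sqr_ge0 // sqrtr_sqr ger0_norm.
by rewrite ler_sqrt // mulr_ge0 // sqr_ge0.
Qed.

Lemma combine (R : realType) (nu nv a b p q r : R) :
  0 <= nu -> 0 <= nv -> nv <= 1 -> 0 <= a -> 0 <= b ->
  nu ^+ 2 <= p + q + r -> p <= nu * a * (nv * a) -> q <= nu * a * (nv * b) ->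
  r <= nu * b * (nv * a) -> nu <= a ^+ 2 + 2 * a * b.
Proof.
move=> nu0 nv0 nv1 a0 b0 h hp hq hr.
have C0 : 0 <= a ^+ 2 + 2 * a * b by rewrite addr_ge0 ?sqr_ge0 // !mulr_ge0.
have h2 : nu ^+ 2 <= nu * (a ^+ 2 + 2 * a * b).
  apply: le_trans h _.
  have e : nu * a * (nv * a) + nu * a * (nv * b) + nu * b * (nv * a)
         = nv * (nu * (a ^+ 2 + 2 * a * b)) by ring.
  apply: le_trans (_ : _ <= nu * a * (nv * a) + nu * a * (nv * b) + nu * b * (nv * a)) _.
    by rewrite !lerD.
  rewrite e ler_piMl // mulr_ge0 //.
have [->|nz] := eqVneq nu 0; first by [].
have np : 0 < nu by rewrite lt_neqAle eq_sym nz nu0.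
by move: h2; rewrite expr2 ler_pM2l.
Qed.

Unset Implicit Arguments. Set Strict Implicit.

Theorem mainTheorem2 (dT : measure_display) (T : measurableType dT)
  (R : realType) (P : probability T R) (d : nat)
  (score sB : T -> 'rV[R]_d)
  (score_meas : forall i : 'I_d, measurable_fun setT (fun t => score t 0 i))
  (sB_meas : forall i : 'I_d, measurable_fun setT (fun t => sB t 0 i))
  (score_L2 : P.-integrable setT (fun t => ((vnorm (score t)) ^+ 2)%:E))
  (sB_L2 : P.-integrable setT (fun t => ((vnorm (sB t)) ^+ 2)%:E)) :
  let F_B := second_moment P score in
  let Fbar_B := second_moment P sB in
  let L_B := expect P (fun t => (vnorm (sB t - score t)) ^+ 2) in
  let sRE_B := L_B / \tr F_B in
  let d_B := intdim F_B in
  F_B != 0 ->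
  d_B * sRE_B <= 16 / 100 ->
  spnorm (Fbar_B - F_B) / spnorm F_B <= 24 / 10 * Num.sqrt (d_B * sRE_B).
Proof.
move=> F_B Fbar_B L_B sRE_B d_B hF hx.
have Vs : VX P score := V_of_L2 score_meas score_L2.
have Vsb : VX P sB := V_of_L2 sB_meas sB_L2.
pose e := fun t => sB t - score t.
have Ve : VX P e.
  move=> i.
  have -> : (fun t => e t 0 i) = (fun t => sB t 0 i + (-1) * score t 0 i).
    by apply: funext => t; rewrite /e !mxE; ring.
  by apply: V_add => //; apply: V_scale.
set N := spnorm F_B.
have N0 : 0 <= N := spnorm_ge0 F_B.
have L0 : 0 <= L_B by apply: expect_ge0 => t; exact: sqr_ge0.
have key : spnorm (Fbar_B - F_B) <= L_B + 2 * Num.sqrt L_B * Num.sqrt N.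
  apply: spnorm_le => v hv.
  set u := v *m (Fbar_B - F_B)^T.
  pose f1 := fun t => dot u (score t).
  pose g1 := fun t => dot u (e t).
  pose f2 := fun t => dot v (score t).
  pose g2 := fun t => dot v (e t).
  have Vf1 : V P f1 := Vdot u Vs.
  have Vg1 : V P g1 := Vdot u Ve.
  have Vf2 : V P f2 := Vdot v Vs.
  have Vg2 : V P g2 := Vdot v Ve.
  have Huu : vnorm u ^+ 2 = expect P (fun t => g1 t * g2 t)
      + expect P (fun t => g1 t * f2 t) + expect P (fun t => f1 t * g2 t).
    rewrite vnorm_sq {2}/u dot_mulmx.
    have hM : forall j i, (Fbar_B - F_B) j i =
        expect P (fun t => sB t 0 j * sB t 0 i)
        - expect P (fun t => score t 0 j * score t 0 i).
      by move=> j i; rewrite !mxE.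
    have -> : \sum_(j < d) \sum_(i < d) u 0 j * v 0 i * (Fbar_B - F_B) j i =
       \sum_(j < d) \sum_(i < d) u 0 j * v 0 i *
           expect P (fun t => sB t 0 j * sB t 0 i)
     - \sum_(j < d) \sum_(i < d) u 0 j * v 0 i *
           expect P (fun t => score t 0 j * score t 0 i).
      rewrite -sumrB; apply: eq_bigr => j _; rewrite -sumrB.
      by apply: eq_bigr => i _; rewrite hM; ring.
    rewrite !KI //.
    have -> : (fun t => dot u (sB t) * dot v (sB t)) =
      (fun t => f1 t * f2 t + ((fun t => g1 t * g2 t) t +
          ((fun t => g1 t * f2 t) t + (fun t => f1 t * g2 t) t))).
      apply: funext => t; rewrite /f1 /f2 /g1 /g2 /e !dotB; ring.
    rewrite expectD; try by repeat apply: IntD; apply: V_mul.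
    rewrite expectD; try by repeat apply: IntD; apply: V_mul.
    rewrite expectD; try by apply: V_mul.
    rewrite /f1 /f2; ring.
  have nu0 := vnorm_ge0 u; have nv0 := vnorm_ge0 v.
  have bf1 : Num.sqrt (expect P (fun t => f1 t ^+ 2)) <= vnorm u * Num.sqrt N.
    by apply: sqrt_bound => //; exact: quad_F.
  have bf2 : Num.sqrt (expect P (fun t => f2 t ^+ 2)) <= vnorm v * Num.sqrt N.
    by apply: sqrt_bound => //; exact: quad_F.
  have bg1 : Num.sqrt (expect P (fun t => g1 t ^+ 2)) <= vnorm u * Num.sqrt L_B.
    by apply: sqrt_bound => //; exact: (quad_e _ Ve).
  have bg2 : Num.sqrt (expect P (fun t => g2 t ^+ 2)) <= vnorm v * Num.sqrt L_B.
    by apply: sqrt_bound => //; exact: (quad_e _ Ve).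
  have h0 : vnorm u ^+ 2 <= expect P (fun t => g1 t * g2 t)
      + expect P (fun t => g1 t * f2 t) + expect P (fun t => f1 t * g2 t).
    by rewrite Huu.
  have := combine nu0 nv0 hv (sqrtr_ge0 L_B) (sqrtr_ge0 N) h0.
  rewrite sqr_sqrtr //; apply.
  - apply: le_trans (ler_norm _) _; apply: le_trans (CS Vg1 Vg2) _.
    by apply: ler_pM => //; exact: sqrtr_ge0.
  - apply: le_trans (ler_norm _) _; apply: le_trans (CS Vg1 Vf2) _.
    by apply: ler_pM => //; exact: sqrtr_ge0.
  - apply: le_trans (ler_norm _) _; apply: le_trans (CS Vf1 Vg2) _.
    by apply: ler_pM => //; exact: sqrtr_ge0.
have [N00|Nn0] := eqVneq N 0.
  by rewrite N00 invr0 mulr0 mulr_ge0 // sqrtr_ge0.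
have Np : 0 < N by rewrite lt_neqAle eq_sym Nn0 N0.
have trne : \tr F_B != 0 := tr_ne0 Vs hF.
have hx' : d_B * sRE_B = L_B / N.
  by rewrite /d_B /sRE_B /intdim -/N; field; apply/andP; split.
rewrite hx' in hx *.
set a := Num.sqrt L_B; set b := Num.sqrt N.
have La : L_B = a ^+ 2 by rewrite sqr_sqrtr.
have Nb : N = b ^+ 2 by rewrite sqr_sqrtr.
have bp : 0 < b by rewrite sqrtr_gt0.
have a0 : 0 <= a := sqrtr_ge0 _.
have z0 : 0 <= a / b by rewrite divr_ge0 // ltW.
have hz : L_B / N = (a / b) ^+ 2 by rewrite La Nb; field; rewrite gt_eqF.
rewrite hz sqrtr_sqr ger0_norm //.
rewrite hz in hx.
apply: le_trans (_ : _ <= (L_B + 2 * a * b) / N) _.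
  by rewrite ler_wpM2r // invr_ge0.
have -> : (L_B + 2 * a * b) / N = (a / b) ^+ 2 + 2 * (a / b).
  by rewrite La Nb; field; rewrite gt_eqF.
have : a / b <= 2 / 5 by nra.
nra.
Qed.
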